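(* Let $R$ be a unital associative ring, $n=3$ and $k\ge2$. Then $${\cal S}={\rm dom}(J)\cap{\rm dom}(J^{-1})={\rm dom}(J^k)\quad\text{and}\quad \widehat{\cal S}={\rm dom}(\Phi)\cap{\rm dom}(\Phi^{-1})={\rm dom}(\Phi^k).$$ Furthermore, $J$ restricted to ${\cal S}$ is a bijection from ${\cal S}$ onto itself, and $\Phi$ restricted to $\widehat{\cal S}$ is a bijection from $\widehat{\cal S}$ onto itself.
   Context: $R^*$: units of $R$. $M_3^*(R)$: invertible $3\times3$ matrices; $M_3^\star(R)$: matrices with all entries in $R^*$. $J_1(M)=M^{-1}$ on $M_3^*(R)$; $J_2(M)_{jk}=(M_{kj})^{-1}$ on $M_3^\star(R)$; $J=J_2\circ J_1$, $J^{-1}=J_1\circ J_2$, where $g\circ f$ has domain $\{x\in{\rm dom}(f):f(x)\in{\rm dom}(g)\}$, and powers are iterated compositions. $\widehat M_3(R)$: matrices whose first row and column consist of $1$'s. For $A=\{a_{j,k}\}\in M_3^\star(R)$: $\Lambda^L(A)_{j,k}=a_{1,1}a_{j,1}^{-1}a_{j,k}a_{1,k}^{-1}$, $\Lambda^R(A)_{j,k}=a_{j,1}^{-1}a_{j,k}a_{1,k}^{-1}a_{1,1}$. $\Phi(A)=J_2(\Lambda^L(A^{-1}))$ with ${\rm dom}(\Phi)={\rm dom}(J)\cap\widehat M_3(R)\cap M_3^\star(R)$; $\Phi^{-1}(A)=\Lambda^R(J^{-1}(A))$ with domain $\widehat M_3(R)\cap\{M\in{\rm dom}(J^{-1}):J^{-1}(M)\in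 M_3^\star(R)\}$. ${\cal S}=\{M\in M_3(R):$ all square submatrices of $M$ (including $M$ and its $1\times1$ submatrices) are invertible and $J_2(M)$ is invertible$\}$, and $\widehat{\cal S}={\cal S}\cap\widehat M_3(R)$. *)

(* Defs.v *)
From mathcomp Require Import all_boot all_order all_algebra.
From Stdlib Require Import ClassicalEpsilon.
Set Implicit Arguments. Unset Strict Implicit. Unset Printing Implicit Defensive.
Import GRing.Theory.
Local Open Scope ring_scope.

Section PFun.
Variable T : Type.
Definition pfun := T -> option T.
Definition pdom (f : pfun) (x : T) : Prop := f x <> None.
Definition pcomp (g f : pfun) : pfun :=
  fun x => match f x with Some y => g y | None => None end.
Fixpoint piter (n : nat) (f : pfun) : pfun :=
  match n with O => fun x => Some x | S n' => pcomp f (piter n' f) end.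
Definition pbij_on (P : T -> Prop) (f : pfun) : Prop :=
  [/\ (forall x, P x -> exists2 y, f x = Some y & P y),
      (forall x y, P x -> P y -> f x = f y -> x = y) &
      (forall y, P y -> exists2 x, P x & f x = Some y)].
End PFun.

Section Mats.
Variable R : unitRingType.

Definition mx_inv_of (m : nat) (M N : 'M[R]_m) : Prop :=
  M *m N = 1%:M /\ N *m M = 1%:M.
Definition mx_invertible (m : nat) (M : 'M[R]_m) : Prop :=
  exists N, mx_inv_of M N.

Definition J1 : pfun 'M[R]_3 := fun M =>
  match excluded_middle_informative (mx_invertible M) with
  | left H => Some (proj1_sig (constructive_indefinite_description _ H))
  | right _ => None
  end.

Definition all_units (M : 'M[R]_3) : bool :=
  [forall i, [forall j, M i j \is a GRing.unit]].

Definition J2tot (M : 'M[R]_3) : 'M[R]_3 := \matrix_(j, k) (M k j)^-1.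
Definition J2 : pfun 'M[R]_3 := fun M =>
  if all_units M then Some (J2tot M) else None.

Definition J : pfun 'M[R]_3 := pcomp J2 J1.
Definition Jinv : pfun 'M[R]_3 := pcomp J1 J2.

Definition is_hat (M : 'M[R]_3) : Prop :=
  forall i, M ord0 i = 1 /\ M i ord0 = 1.

Definition LamL (A : 'M[R]_3) : 'M[R]_3 :=
  \matrix_(j, k) (A ord0 ord0 * (A j ord0)^-1 * A j k * (A ord0 k)^-1).
Definition LamR (A : 'M[R]_3) : 'M[R]_3 :=
  \matrix_(j, k) ((A j ord0)^-1 * A j k * (A ord0 k)^-1 * A ord0 ord0).

(* Phi(A) = J_2(Lambda^L(A^{-1})), dom(Phi) = dom(J) /\ hat /\ M_3^star.
   (On this domain Lambda^L(A^{-1}) has unit entries, so J_2 is applied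
   via its total formula J2tot.) *)
Definition Phi : pfun 'M[R]_3 := fun A =>
  match excluded_middle_informative (is_hat A /\ all_units A) with
  | left _ => match J1 A with
              | Some B => if all_units B then Some (J2tot (LamL B)) else None
              | None => None
              end
  | right _ => None
  end.

(* Phi^{-1}(A) = Lambda^R(J^{-1}(A)),
   domain hat /\ {M in dom(J^{-1}) | J^{-1}(M) in M_3^star} *)
Definition Phiinv : pfun 'M[R]_3 := fun A =>
  match excluded_middle_informative (is_hat A) with
  | left _ => match Jinv A with
              | Some B => if all_units B then Some (LamR B) else None
              | None => None
              end
  | right _ => None
  end.

(* the set S: all square submatrices (rows f, columns g, strictly increasing
   index selections of size m >= 1) are invertible, and J_2(M) is invertible *)
Definition incr (m : nat) (f : 'I_m -> 'I_3) : Prop :=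
  forall i j : 'I_m, (i < j)%N -> (f i < f j)%N.

Definition inS (M : 'M[R]_3) : Prop :=
  (forall (m : nat) (f g : 'I_m -> 'I_3), (0 < m)%N -> incr f -> incr g ->
      mx_invertible (mxsub f g M))
  /\ (exists2 N, J2 M = Some N & mx_invertible N).

Definition inShat (M : 'M[R]_3) : Prop := inS M /\ is_hat M.
End Mats.

(* Main.v *)
Require Import Defs.
From Stdlib Require Import Classical ClassicalEpsilon.
From mathcomp Require Import all_boot all_order all_algebra zify.
Set Implicit Arguments. Unset Strict Implicit. Unset Printing Implicit Defensive.
Import GRing.Theory.
Local Open Scope ring_scope.

Lemma inv_uniq (R : unitRingType) n (M N N' : 'M[R]_n) :
  M *m N = 1%:M -> N' *m M = 1%:M -> N = N'.
Proof. by move=> h1 h2; rewrite -[N]mul1mx -h2 -mulmxA h1 mulmx1. Qed.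

Lemma inv_of_sym (R : unitRingType) n (M N : 'M[R]_n) :
  mx_inv_of M N -> mx_inv_of N M.
Proof. by case=> h1 h2; split. Qed.

Lemma inv_of_inv (R : unitRingType) n (M N : 'M[R]_n) :
  mx_inv_of M N -> mx_invertible N.
Proof. by move=> h; exists M; apply: inv_of_sym. Qed.

Lemma inv_of_mul (R : unitRingType) n (A Ai B Bi : 'M[R]_n) :
  mx_inv_of A Ai -> mx_inv_of B Bi -> mx_inv_of (A *m B) (Bi *m Ai).
Proof.
case=> a1 a2 [b1 b2]; split.
  by rewrite mulmxA -(mulmxA A) b1 mulmx1 a1.
by rewrite mulmxA -(mulmxA Bi) a2 mulmx1 b2.
Qed.

Lemma block_eqs (R : unitRingType) m1 m2 (A : 'M[R]_m1) B C (D : 'M[R]_m2) P Q U V :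
  block_mx A B C D *m block_mx P Q U V = 1%:M ->
  [/\ A *m P + B *m U = 1%:M, A *m Q + B *m V = 0,
      C *m P + D *m U = 0 & C *m Q + D *m V = 1%:M].
Proof.
by rewrite mulmx_block (scalar_mx_block m1 m2 1) => /eq_block_mx.
Qed.

Lemma addr0_eqN (V : zmodType) (x y : V) : x + y = 0 -> x = - y.
Proof. by move/eqP; rewrite addr_eq0 => /eqP. Qed.

Lemma addr0_eqN' (V : zmodType) (x y : V) : x + y = 0 -> y = - x.
Proof. by rewrite addrC; apply: addr0_eqN. Qed.

Lemma block_compl (R : unitRingType) m1 m2 (A : 'M[R]_m1) B C (D : 'M[R]_m2) P Q U V :
  block_mx A B C D *m block_mx P Q U V = 1%:M ->
  block_mx P Q U V *m block_mx A B C D = 1%:M ->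
  (forall Vi, mx_inv_of V Vi -> mx_inv_of A (P - Q *m Vi *m U)) /\
  (forall Ai, mx_inv_of A Ai -> mx_inv_of V (D - C *m Ai *m B)).
Proof.
move=> /block_eqs [e1 e2 e3 e4] /block_eqs [f1 f2 f3 f4]; split.
- move=> Vi [v1 v2]; split.
    rewrite mulmxBr !mulmxA (addr0_eqN e2) mulNmx -(mulmxA B) v1 mulmx1.
    by rewrite mulNmx opprK.
  rewrite mulmxBl -!mulmxA (addr0_eqN f3) !mulmxN.
  by rewrite (mulmxA Vi) v2 mul1mx opprK f1.
- move=> Ai [a1 a2]; split.
    rewrite mulmxBr !mulmxA (addr0_eqN' f3) !mulNmx -(mulmxA U) a1 mulmx1.
    by rewrite opprK addrC f4.
  rewrite mulmxBl -!mulmxA (addr0_eqN' e2) !mulmxN.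
  by rewrite (mulmxA Ai) a2 mul1mx opprK addrC e4.
Qed.

Lemma block1 (R : unitRingType) m1 m2 :
  (1%:M : 'M[R]_(m1 + m2)) = block_mx 1%:M 0 0 1%:M.
Proof. exact: scalar_mx_block. Qed.

Lemma inv_low (R : unitRingType) m1 m2 (X : 'M[R]_(m2, m1)) :
  mx_inv_of (block_mx 1%:M 0 X 1%:M) (block_mx 1%:M 0 (- X) 1%:M).
Proof.
split; rewrite mulmx_block block1 !mul1mx !mul0mx !mulmx0 !mulmx1 ?addr0 ?add0r;
  by rewrite ?subrr ?addNr.
Qed.

Lemma inv_up (R : unitRingType) m1 m2 (X : 'M[R]_(m1, m2)) :
  mx_inv_of (block_mx 1%:M X 0 1%:M) (block_mx 1%:M (- X) 0 1%:M).
Proof.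
split; rewrite mulmx_block block1 !mul1mx !mul0mx !mulmx0 !mulmx1 ?addr0 ?add0r;
  by rewrite ?subrr ?addNr.
Qed.

Lemma inv_diag (R : unitRingType) m1 m2 (A Ai : 'M[R]_m1) (S Si : 'M[R]_m2) :
  mx_inv_of A Ai -> mx_inv_of S Si ->
  mx_inv_of (block_mx A 0 0 S) (block_mx Ai 0 0 Si).
Proof.
case=> a1 a2 [s1 s2]; split;
  by rewrite mulmx_block block1 !mul0mx !mulmx0 ?addr0 ?add0r ?a1 ?a2 ?s1 ?s2.
Qed.

Lemma block_schur_l (R : unitRingType) m1 m2 (A : 'M[R]_m1) B C (D : 'M[R]_m2) Ai :
  mx_inv_of A Ai ->
  (mx_invertible (block_mx A B C D) <-> mx_invertible (D - C *m Ai *m B)).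
Proof.
move=> hA; split.
  case=> N [n1 n2]; move: n1 n2; rewrite -(submxK N) => n1 n2.
  have [_ h] := block_compl n1 n2.
  exact: inv_of_inv (h _ hA).
case=> Si hS.
have e : block_mx A B C D = block_mx 1%:M 0 (C *m Ai) 1%:M *m
   block_mx A 0 0 (D - C *m Ai *m B) *m block_mx 1%:M (Ai *m B) 0 1%:M.
  case: hA => a1 a2.
  rewrite !mulmx_block !mul1mx !mul0mx !mulmx0 !mulmx1 !addr0 !add0r.
  by rewrite (mulmxA A) a1 mul1mx -(mulmxA C Ai A) a2 mulmx1 (mulmxA C) addrC subrK.
rewrite e; eexists.
exact: (inv_of_mul (inv_of_mul (inv_low (C *m Ai)) (inv_diag hA hS)) (inv_up (Ai *m B))).
Qed.

Lemma block_schur_r (R : unitRingType) m1 m2 (A : 'M[R]_m1) B C (D : 'M[R]_m2) Di :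
  mx_inv_of D Di ->
  (mx_invertible (block_mx A B C D) <-> mx_invertible (A - B *m Di *m C)).
Proof.
move=> hD; split.
  case=> N [n1 n2]; move: n1 n2; rewrite -(submxK N) => n1 n2.
  have [h _] := block_compl n2 n1.
  exact: inv_of_inv (h _ hD).
case=> Si hS.
have e : block_mx A B C D = block_mx 1%:M (B *m Di) 0 1%:M *m
   block_mx (A - B *m Di *m C) 0 0 D *m block_mx 1%:M 0 (Di *m C) 1%:M.
  case: hD => d1 d2.
  rewrite !mulmx_block !mul1mx !mul0mx !mulmx0 !mulmx1 !addr0 !add0r.
  by rewrite -(mulmxA B Di D) d2 mulmx1 (mulmxA B Di C) subrK (mulmxA D Di C) d1 mul1mx.
rewrite e; eexists.
exact: (inv_of_mul (inv_of_mul (inv_up (B *m Di)) (inv_diag hS hD)) (inv_low (Di *m C))).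
Qed.

Lemma inv_of_sub (R : unitRingType) n (M N : 'M[R]_n) (f g : 'I_n -> 'I_n) :
  injective f -> injective g -> mx_inv_of M N ->
  mx_inv_of (mxsub f g M) (mxsub g f N).
Proof.
move=> fi gi [h1 h2]; split; apply/matrixP => a b; rewrite !mxE.
  under eq_bigr do rewrite !mxE.
  transitivity (\sum_k M (f a) k * N k (f b)); first exact: esym (reindex_inj gi).
  by move/matrixP: h1 => /(_ (f a) (f b)); rewrite !mxE => ->; rewrite (inj_eq fi).
under eq_bigr do rewrite !mxE.
transitivity (\sum_k N (g a) k * M k (g b)); first exact: esym (reindex_inj fi).
by move/matrixP: h2 => /(_ (g a) (g b)); rewrite !mxE => ->; rewrite (inj_eq gi).
Qed.

Lemma mul11 (R : unitRingType) (A B : 'M[R]_1) : (A *m B) ord0 ord0 = A ord0 ord0 * B ord0 ord0.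
Proof. by rewrite mxE big_ord1. Qed.

Lemma inv1P (R : unitRingType) (X : 'M[R]_1) :
  mx_invertible X <-> X ord0 ord0 \is a GRing.unit.
Proof.
split.
  case=> N [h1 h2]; apply/unitrP; exists (N ord0 ord0); split.
    by move/matrixP: h2 => /(_ ord0 ord0); rewrite mul11 mxE.
  by move/matrixP: h1 => /(_ ord0 ord0); rewrite mul11 mxE.
move=> hu; exists ((X ord0 ord0)^-1)%:M; split; apply/matrixP => a b;
  rewrite !ord1 mul11 !mxE /= ?mulr1n ?mulVr ?mulrV //.
Qed.

Lemma inv1_of (R : unitRingType) (X : 'M[R]_1) :
  X ord0 ord0 \is a GRing.unit -> mx_inv_of X ((X ord0 ord0)^-1)%:M.
Proof.
move=> hu; split; apply/matrixP => a b;
  rewrite !ord1 mul11 !mxE /= ?mulr1n ?mulVr ?mulrV //.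
Qed.

Definition pf (i : 'I_3) (a : 'I_(2+1)) : 'I_3 :=
  match split a with inl x => lift i x | inr _ => i end.

Lemma pf_l i (x : 'I_2) : pf i (lshift 1 x) = lift i x.
Proof. by rewrite /pf -[lshift 1 x]/(unsplit (inl _ x)) unsplitK. Qed.

Lemma pf_r i (y : 'I_1) : pf i (rshift 2 y) = i.
Proof. by rewrite /pf -[rshift 2 y]/(unsplit (inr _ y)) unsplitK. Qed.

Lemma pf_inj i : injective (pf i).
Proof.
move=> a b; rewrite /pf.
case: (split_ordP a) => [x -> | y ->]; case: (split_ordP b) => [x' -> | y' ->].
- by move/lift_inj ->.
- by move=> e; have := neq_lift i x; rewrite e eqxx.
- by move=> e; have := neq_lift i x'; rewrite -e eqxx.
- by rewrite (ord1 y) (ord1 y').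
Qed.

Definition blkM (R : unitRingType) (M : 'M[R]_3) i j : 'M[R]_(2+1) := mxsub (pf i) (pf j) M.

Lemma blk_ul (R : unitRingType) (M : 'M[R]_3) i j :
  ulsubmx (blkM M i j) = mxsub (lift i) (lift j) M.
Proof. by apply/matrixP => a b; rewrite !mxE pf_l pf_l. Qed.

Lemma blk_dr (R : unitRingType) (M : 'M[R]_3) i j :
  drsubmx (blkM M i j) ord0 ord0 = M i j.
Proof. by rewrite !mxE pf_r pf_r. Qed.

Lemma L1_both (R : unitRingType) (M N : 'M[R]_3) i j : mx_inv_of M N ->
  (forall Vi, mx_inv_of (drsubmx (blkM N j i)) Vi ->
     mx_inv_of (mxsub (lift i) (lift j) M)
       (ulsubmx (blkM N j i) - ursubmx (blkM N j i) *m Vi *m dlsubmx (blkM N j i))) /\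
  (forall Ai, mx_inv_of (mxsub (lift i) (lift j) M) Ai ->
     mx_inv_of (drsubmx (blkM N j i)) (drsubmx (blkM M i j) - dlsubmx (blkM M i j) *m Ai *m ursubmx (blkM M i j))).
Proof.
move=> h.
have [h1 h2] := inv_of_sub (@pf_inj i) (@pf_inj j) h.
have e1 : blkM M i j *m blkM N j i = 1%:M by exact: h1.
have e2 : blkM N j i *m blkM M i j = 1%:M by exact: h2.
rewrite -(submxK (blkM M i j)) -(submxK (blkM N j i)) in e1 e2.
have [c1 c2] := block_compl e1 e2.
by rewrite -blk_ul; split.
Qed.

Lemma L1 (R : unitRingType) (M N : 'M[R]_3) i j : mx_inv_of M N ->
  (mx_invertible (mxsub (lift i) (lift j) M) <-> N j i \is a GRing.unit).
Proof.
move=> h; have [c1 c2] := L1_both i j h; split.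
  case=> Ai hA; rewrite -(blk_dr N); apply/inv1P.
  exact: inv_of_inv (inv_of_sym (c2 _ hA)).
rewrite -(blk_dr N) => hu; eexists; exact: c1 _ (inv1_of hu).
Qed.

Lemma L1_entry (R : unitRingType) (M N : 'M[R]_3) i j Ai : mx_inv_of M N ->
  mx_inv_of (mxsub (lift i) (lift j) M) Ai -> N j i \is a GRing.unit ->
  forall a b, Ai a b = N (lift j a) (lift i b) - N (lift j a) i * (N j i)^-1 * N j (lift i b).
Proof.
move=> h hA hu.
have [c1 c2] := L1_both i j h.
rewrite -(blk_dr N) in hu.
have := c1 _ (inv1_of hu); case=> _ e.
have [e1 _] := hA.
have -> : Ai = (ulsubmx (blkM N j i) - ursubmx (blkM N j i) *m ((drsubmx (blkM N j i) ord0 ord0)^-1)%:M *m dlsubmx (blkM N j i)).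
  exact: inv_uniq e1 e.
move=> a b; rewrite !mxE big_ord1 !mxE big_ord1 !mxE /=.
by rewrite (pf_l j a) (pf_l i b) !pf_r mulr1n.
Qed.

Definition Ht (R : unitRingType) n (X : 'M[R]_n) : 'M[R]_n := \matrix_(a, b) (X b a)^-1.

Lemma scal_id (R : unitRingType) (a b c d : R) : b \is a GRing.unit -> c \is a GRing.unit ->
  d^-1 - b^-1 * a * c^-1 = - (b^-1 * (a - b * d^-1 * c) * c^-1).
Proof.
move=> hb hc.
rewrite mulrBr mulrBl !mulrA mulVr // mul1r -(mulrA _ c) mulrV // mulr1.
by rewrite opprB.
Qed.

Lemma unit_sand (R : unitRingType) (u y v : R) : u \is a GRing.unit -> v \is a GRing.unit ->
  (- (u * y * v) \is a GRing.unit) = (y \is a GRing.unit).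
Proof. by move=> hu hv; rewrite unitrN unitrMl // unitrMr. Qed.

Lemma L2 (R : unitRingType) (X : 'M[R]_(1+1)) : (forall a b, X a b \is a GRing.unit) ->
  (mx_invertible (Ht X) <-> mx_invertible X).
Proof.
move=> hu.
set l : 'I_(1+1) := lshift 1 ord0; set r : 'I_(1+1) := rshift 1 ord0.
have h1 : mx_inv_of (ulsubmx (Ht X)) (((ulsubmx (Ht X)) ord0 ord0)^-1)%:M.
  by apply: inv1_of; rewrite !mxE unitrV.
have h2 : mx_inv_of (drsubmx X) (((drsubmx X) ord0 ord0)^-1)%:M.
  by apply: inv1_of; rewrite !mxE.
have e1 := @block_schur_l _ _ _ _ (ursubmx (Ht X)) (dlsubmx (Ht X)) (drsubmx (Ht X)) _ h1; rewrite submxK in e1.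
have e2 := @block_schur_r _ _ _ (ulsubmx X) (ursubmx X) (dlsubmx X) _ _ h2; rewrite submxK in e2.
rewrite e1 e2.
rewrite !inv1P !mxE !big_ord1 !mxE !big_ord1 !mxE /= !mulr1n invrK.
rewrite -/l -/r scal_id ?unit_sand ?unitrV //.
Qed.

Lemma inv_eq2 (R : unitRingType) (x y : R) : x * y = 1 -> y * x = 1 -> x^-1 = y.
Proof.
move=> h1 h2; have hx : x \is a GRing.unit by apply/unitrP; exists y.
by rewrite -[x^-1]mulr1 -h1 mulrA mulVr // mul1r.
Qed.

Lemma unit2 (R : unitRingType) (x y : R) : x * y = 1 -> y * x = 1 -> x \is a GRing.unit.
Proof. by move=> h1 h2; apply/unitrP; exists y. Qed.

Lemma core_scal (R : unitRingType) (n00 n0j nkj nk0 m00 m0k mjk mj0 : R) :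
  n0j \is a GRing.unit -> nk0 \is a GRing.unit -> nkj \is a GRing.unit ->
  m0k \is a GRing.unit -> mj0 \is a GRing.unit -> mjk \is a GRing.unit ->
  (n00 - n0j * nkj^-1 * nk0) * (m00 - m0k * mjk^-1 * mj0) = 1 ->
  (m00 - m0k * mjk^-1 * mj0) * (n00 - n0j * nkj^-1 * nk0) = 1 ->
  (mjk^-1 - m0k^-1 * m00 * mj0^-1) \is a GRing.unit /\
  nkj^-1 - n0j^-1 * n00 * nk0^-1 =
    (n0j^-1 * mj0^-1) * (mjk^-1 - m0k^-1 * m00 * mj0^-1)^-1 * (m0k^-1 * nk0^-1).
Proof.
move=> u1 u2 u3 u4 u5 u6.
set q := n00 - _; set p := m00 - _ => qp pq.
have hp : p \is a GRing.unit by exact: unit2 pq qp.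
rewrite !scal_id //; split; first by rewrite unit_sand ?unitrV.
rewrite -/q -/p.
have -> : (- (m0k^-1 * p * mj0^-1))^-1 = - (mj0 * q * m0k).
  rewrite invrN invrM ?unitrMl ?unitrV // invrM ?unitrV // !invrK (inv_eq2 pq qp).
  by rewrite mulrA.
rewrite mulrN mulNr; congr (- _).
rewrite !mulrA -(mulrA _ mj0^-1) mulVr // mulr1 -(mulrA _ m0k) mulrV // mulr1.
done.
Qed.

Lemma QD (R : unitRingType) (P Pi : 'M[R]_(1+1)) :
  mx_inv_of P Pi -> P (rshift 1 ord0) (rshift 1 ord0) \is a GRing.unit ->
  let l := lshift 1 ord0 in let r := rshift 1 ord0 in
  (P l l - P l r * (P r r)^-1 * P r l) * Pi l l = 1 /\
  Pi l l * (P l l - P l r * (P r r)^-1 * P r l) = 1.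
Proof.
move=> [h1 h2] hu l r.
rewrite -(submxK P) -(submxK Pi) in h1 h2.
have [c1 _] := block_compl h2 h1.
have hd : drsubmx P ord0 ord0 \is a GRing.unit by rewrite !mxE.
have [e1 e2] := c1 _ (inv1_of hd).
move/matrixP: e1 => /(_ ord0 ord0); move/matrixP: e2 => /(_ ord0 ord0).
do 4 rewrite ?mxE ?big_ord1 /= ?mulr1n.
move=> e2 e1; split; [exact: e2 | exact: e1].
Qed.

Lemma rsh_lift (a : 'I_2) : (rshift 1 a : 'I_(1+2)) = lift ord0 a.
Proof. by apply: val_inj. Qed.

Lemma lsh0 : (lshift 2 ord0 : 'I_(1+2)) = ord0.
Proof. by apply: val_inj. Qed.

Lemma lift_l (x : 'I_2) : lift (lift (ord0 : 'I_3) x) (lshift 1 ord0 : 'I_(1+1)) = ord0.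
Proof. by apply: val_inj. Qed.

Lemma lift_r (a : 'I_2) :
  lift (lift (ord0 : 'I_3) (rev_ord a)) (rshift 1 ord0 : 'I_(1+1)) = lift ord0 a.
Proof. by apply: val_inj; case: a => [[|[|]]] //=. Qed.

Lemma L3_entry (R : unitRingType) (M N : 'M[R]_3) (a b : 'I_2) :
  mx_inv_of M N -> (forall i j, M i j \is a GRing.unit) -> (forall i j, N i j \is a GRing.unit) ->
  let j := lift ord0 a in let k := lift ord0 b in
  let j' := lift ord0 (rev_ord a) in let k' := lift ord0 (rev_ord b) in
  let o := (ord0 : 'I_3) in
  ((M j' k')^-1 - (M o k')^-1 * M o o * (M j' o)^-1) \is a GRing.unit /\
  (N k j)^-1 - (N o j)^-1 * N o o * (N k o)^-1 =
  ((N o j)^-1 * (M j' o)^-1) * ((M j' k')^-1 - (M o k')^-1 * M o o * (M j' o)^-1)^-1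
     * ((M o k')^-1 * (N k o)^-1).
Proof.
move=> hMN uM uN j k j' k' o.
have hNM := inv_of_sym hMN.
have [Pi hP] : mx_invertible (mxsub (lift k') (lift j') N) by apply/(L1 k' j' hNM).
have hE := L1_entry hNM hP (uM j' k').
have [q1 q2] := QD hP (ltac:(rewrite mxE; exact: uN)).
move: q1 q2; rewrite !hE !mxE (lift_l (rev_ord b)) (lift_l (rev_ord a)) !lift_r => q1 q2.
exact: core_scal q1 q2.
Qed.

Lemma scale_inv (R : unitRingType) n (D1 D1i D2 D2i Y : 'M[R]_n) :
  mx_inv_of D1 D1i -> mx_inv_of D2 D2i ->
  (mx_invertible (D1 *m Y *m D2) <-> mx_invertible Y).
Proof.
move=> h1 h2; split.
  case=> Z hZ.
  have e : Y = D1i *m (D1 *m Y *m D2) *m D2i.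
    case: h1 h2 => _ a2 [b1 _].
    by rewrite !mulmxA a2 mul1mx -mulmxA b1 mulmx1.
  rewrite e; eexists.
  exact: inv_of_mul (inv_of_mul (inv_of_sym h1) hZ) (inv_of_sym h2).
case=> Z hZ; eexists; exact: inv_of_mul (inv_of_mul h1 hZ) h2.
Qed.

Lemma diag_inv (R : unitRingType) n (d : 'rV[R]_n) : (forall a, d 0 a \is a GRing.unit) ->
  mx_inv_of (diag_mx d) (diag_mx (\row_a (d 0 a)^-1)).
Proof.
move=> hu; split; rewrite mulmx_diag; apply/matrixP => a b; rewrite !mxE ?mulrV ?mulVr //.
Qed.

Lemma rev_sub_inv (R : unitRingType) (Z : 'M[R]_2) :
  mx_invertible (mxsub (@rev_ord 2) (@rev_ord 2) Z) <-> mx_invertible Z.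
Proof.
have h : forall Z : 'M[R]_2, mx_invertible Z -> mx_invertible (mxsub (@rev_ord 2) (@rev_ord 2) Z).
  move=> Z0 [W hW]; eexists; exact: inv_of_sub (@rev_ord_inj 2) (@rev_ord_inj 2) hW.
split; last exact: h. move/h.
suff -> : mxsub (@rev_ord 2) (@rev_ord 2) (mxsub (@rev_ord 2) (@rev_ord 2) Z) = Z by [].
by apply/matrixP => a b; rewrite !mxE !rev_ordK.
Qed.

Lemma L3 (R : unitRingType) (M N : 'M[R]_3) :
  mx_inv_of M N -> (forall i j, M i j \is a GRing.unit) -> (forall i j, N i j \is a GRing.unit) ->
  (mx_invertible (Ht N) <-> mx_invertible (Ht M)).
Proof.
move=> hMN uM uN.
pose Q : 'M[R]_(1+2) := Ht N; pose G : 'M[R]_(1+2) := Ht M.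
have hQ : mx_inv_of (ulsubmx Q) ((ulsubmx Q ord0 ord0)^-1)%:M.
  by apply: inv1_of; rewrite !mxE unitrV.
have hG : mx_inv_of (ulsubmx G) ((ulsubmx G ord0 ord0)^-1)%:M.
  by apply: inv1_of; rewrite !mxE unitrV.
have eQ := @block_schur_l _ _ _ _ (ursubmx Q) (dlsubmx Q) (drsubmx Q) _ hQ; rewrite submxK in eQ.
have eG := @block_schur_l _ _ _ _ (ursubmx G) (dlsubmx G) (drsubmx G) _ hG; rewrite submxK in eG.
rewrite -/Q -/G eQ eG.
set SQ := drsubmx Q - _; set SG := drsubmx G - _.
pose o : 'I_3 := ord0.
pose al : 'rV[R]_2 := \row_a ((N o (lift o a))^-1 * (M (lift o (rev_ord a)) o)^-1).
pose be : 'rV[R]_2 := \row_b ((M o (lift o (rev_ord b)))^-1 * (N (lift o b) o)^-1).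
have SGE : forall x y, SG x y = (M (lift o y) (lift o x))^-1 - (M o (lift o x))^-1 * M o o * (M (lift o y) o)^-1.
  move=> x y; rewrite /SG /G.
  do 4 rewrite ?mxE ?big_ord1 /= ?mulr1n.
  by rewrite !rsh_lift !lsh0 invrK.
have e : SQ = diag_mx al *m Ht (mxsub (@rev_ord 2) (@rev_ord 2) SG) *m diag_mx be.
  apply/matrixP => a b; rewrite mul_mx_diag mul_diag_mx.
  do 5 rewrite ?mxE ?big_ord1 /= ?mulr1n.
  rewrite !rsh_lift !lsh0 !invrK.
  by have [_ ->] := L3_entry a b hMN uM uN.
have uSG : forall x y, SG x y \is a GRing.unit.
  move=> x y; rewrite -(rev_ordK x) -(rev_ordK y) SGE.
  by have [-> _] := L3_entry (rev_ord y) (rev_ord x) hMN uM uN.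
rewrite e (scale_inv _ (diag_inv _) (diag_inv _)); last 2 first.
- by move=> x; rewrite mxE unitrMl ?unitrV.
- by move=> x; rewrite mxE unitrMl ?unitrV.
rewrite (L2 (X := mxsub (@rev_ord 2) (@rev_ord 2) SG)) ?rev_sub_inv //.
by move=> x y; rewrite mxE.
Qed.

Definition units (R : unitRingType) n (M : 'M[R]_n) := forall i j, M i j \is a GRing.unit.

Lemma all_unitsP (R : unitRingType) (M : 'M[R]_3) : all_units M <-> units M.
Proof.
split.
  by move=> /forallP h i j; have /forallP := h i; apply.
by move=> h; apply/forallP => i; apply/forallP => j; apply: h.
Qed.

Lemma J1_some (R : unitRingType) (M N : 'M[R]_3) : J1 M = Some N <-> mx_inv_of M N.
Proof.
rewrite /J1; case: excluded_middle_informative => h.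
  case: (constructive_indefinite_description _ h) => N0 h0 /=; split.
    by case=> <-.
  move=> h1; congr Some; case: h0 => a1 _; case: h1 => _ b2; exact: inv_uniq a1 b2.
by split=> // h1; case: h; exists N.
Qed.

Lemma J1_none (R : unitRingType) (M : 'M[R]_3) : J1 M = None <-> ~ mx_invertible M.
Proof.
rewrite /J1; case: excluded_middle_informative => h.
  by case: (constructive_indefinite_description _ h).
by [].
Qed.

Lemma J1_cases (R : unitRingType) (M : 'M[R]_3) :
  (exists2 N, J1 M = Some N & mx_inv_of M N) \/ (J1 M = None /\ ~ mx_invertible M).
Proof.
case e: (J1 M) => [N|].
  by left; exists N => //; apply/J1_some.
by right; split => //; apply/J1_none.
Qed.

Lemma J2_some (R : unitRingType) (M : 'M[R]_3) : units M -> J2 M = Some (Ht M).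
Proof. by move/all_unitsP; rewrite /J2 => ->. Qed.

Lemma J2_dom (R : unitRingType) (M : 'M[R]_3) : J2 M <> None <-> units M.
Proof.
rewrite /J2; split; last by move/all_unitsP => ->.
by case: ifP => // /all_unitsP.
Qed.

Lemma HtK (R : unitRingType) n (M : 'M[R]_n) : units M -> Ht (Ht M) = M.
Proof. by move=> u; apply/matrixP => i j; rewrite !mxE invrK. Qed.

Lemma Ht_units (R : unitRingType) n (M : 'M[R]_n) : units M -> units (Ht M).
Proof. by move=> u i j; rewrite mxE unitrV. Qed.

Lemma Ht_sub (R : unitRingType) (M : 'M[R]_3) i j :
  mxsub (lift i) (lift j) (Ht M) = Ht (mxsub (lift j) (lift i) M) :> 'M[R]_(1+1).
Proof. by apply/matrixP => a b; rewrite !mxE. Qed.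

Definition SS (R : unitRingType) (M : 'M[R]_3) :=
  exists N, [/\ mx_inv_of M N, units M, units N & mx_invertible (Ht M)].

Lemma domJ (R : unitRingType) (M : 'M[R]_3) :
  pdom (@J R) M <-> exists N, mx_inv_of M N /\ units N.
Proof.
rewrite /pdom /J /Defs.pcomp /=; case: (J1_cases M) => [[N -> h] | [-> h]].
  rewrite J2_dom; split; first by exists N.
  case=> N' [h' u]; suff -> : N = N' by [].
  by case: h => a1 _; case: h' => _ b2; apply: inv_uniq a1 b2.
by split => // - [N [h' _]]; case: h; exists N.
Qed.

Lemma J_some (R : unitRingType) (M N : 'M[R]_3) :
  mx_inv_of M N -> units N -> J M = Some (Ht N).
Proof. by move=> h u; rewrite /J /Defs.pcomp (proj2 (J1_some _ _) h) J2_some. Qed.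

Lemma domJinv (R : unitRingType) (M : 'M[R]_3) :
  pdom (@Jinv R) M <-> units M /\ mx_invertible (Ht M).
Proof.
rewrite /pdom /Jinv /Defs.pcomp /J2 /=; case: ifP => [/all_unitsP u | nu].
  rewrite J1_none; split; last by case=> _ h; apply.
  by move=> h; split => //; apply: NNPP.
split=> // - [u _]; move/all_unitsP: u; rewrite nu.
by [].
Qed.

Lemma sub_inv_iff (R : unitRingType) (M N : 'M[R]_3) i j :
  mx_inv_of M N -> units N ->
  (mx_invertible (mxsub (lift i) (lift j) (Ht N)) <-> M i j \is a GRing.unit).
Proof.
move=> h uN.
rewrite Ht_sub L2; last by move=> a b; rewrite mxE.
exact: L1 (inv_of_sym h).
Qed.

Lemma C1 (R : unitRingType) (M N : 'M[R]_3) :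
  mx_inv_of M N -> units M -> units N -> mx_invertible (Ht M) -> SS (Ht N).
Proof.
move=> h uM uN hG.
have [Qi hQ] : mx_invertible (Ht N) by apply/(L3 h uM uN).
exists Qi; split => //; first exact: Ht_units.
  move=> i j; apply/(L1 j i hQ); exact/(sub_inv_iff _ _ h uN).
by rewrite HtK //; exists M; apply: inv_of_sym.
Qed.

Lemma C2 (R : unitRingType) (M N Qi : 'M[R]_3) :
  mx_inv_of M N -> units N -> mx_inv_of (Ht N) Qi -> units Qi ->
  units M /\ mx_invertible (Ht M).
Proof.
move=> h uN hQ uQ.
have uM : units M.
  move=> i j; apply/(sub_inv_iff _ _ h uN); apply/(L1 i j hQ); exact: uQ.
split => //; apply/(L3 h uM uN); exists Qi; exact: hQ.
Qed.

Lemma C3 (R : unitRingType) (M N K : 'M[R]_3) :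
  mx_inv_of M N -> units M -> units N -> mx_inv_of (Ht M) K -> SS K.
Proof.
move=> h uM uN hK.
have uK : units K.
  move=> j i; apply/(L1 i j hK); apply/(sub_inv_iff _ _ (inv_of_sym h) uM); exact: uN.
exists (Ht M); split => //; first exact: inv_of_sym.
  exact: Ht_units.
apply/(L3 (inv_of_sym hK) uK (Ht_units uM)); rewrite HtK //; exists N; exact: h.
Qed.

Lemma incr_lift (i : 'I_3) : incr (lift i : 'I_2 -> 'I_3).
Proof.
move=> a b ab; rewrite /= /bump; case: (leqP i a); case: (leqP i b) => /=; lia.
Qed.

Lemma I2_cases (a : 'I_2) : a = ord0 \/ a = ord_max.
Proof. by case: a => [[|[|]]] // H; [left|right]; apply: val_inj. Qed.

Lemma incr2 (f : 'I_2 -> 'I_3) : incr f -> exists i : 'I_3, forall a, f a = lift i a.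
Proof.
move=> hf; have h := hf ord0 ord_max isT.
have h1 := ltn_ord (f ord_max).
exists (inord (3 - f ord0 - f ord_max)) => a; apply: val_inj.
rewrite /= /bump inordK; last lia.
by case: (I2_cases a) => ->; rewrite /=; case: leqP => /=; lia.
Qed.

Lemma incr3 (f : 'I_3 -> 'I_3) : incr f -> forall a, f a = a.
Proof.
move=> hf.
pose o0 : 'I_3 := Ordinal (isT : (0 < 3)%N); pose o1 : 'I_3 := Ordinal (isT : (1 < 3)%N).
pose o2 : 'I_3 := Ordinal (isT : (2 < 3)%N).
have h01 := hf o0 o1 isT; have h12 := hf o1 o2 isT; have h2 := ltn_ord (f o2).
case=> [[|[|[|]]]] // Ha; apply: val_inj => /=.
- have -> : Ordinal Ha = o0 by apply: val_inj.
  lia.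
- have -> : Ordinal Ha = o1 by apply: val_inj.
  lia.
- have -> : Ordinal Ha = o2 by apply: val_inj.
  lia.
Qed.

Lemma incr4 m (f : 'I_m.+4 -> 'I_3) : ~ incr f.
Proof.
move=> hf.
pose o0 : 'I_m.+4 := Ordinal (isT : (0 < m.+4)%N); pose o1 : 'I_m.+4 := Ordinal (isT : (1 < m.+4)%N).
pose o2 : 'I_m.+4 := Ordinal (isT : (2 < m.+4)%N); pose o3 : 'I_m.+4 := Ordinal (isT : (3 < m.+4)%N).
have h01 := hf o0 o1 isT; have h12 := hf o1 o2 isT; have h23 := hf o2 o3 isT.
have h3 := ltn_ord (f o3); lia.
Qed.

Lemma incr_const (i : 'I_3) : incr (fun _ : 'I_1 => i).
Proof. by move=> a b; rewrite !ord1. Qed.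

Lemma inS_SS (R : unitRingType) (M : 'M[R]_3) : inS M <-> SS M.
Proof.
split.
  case=> h1 [N' hJ2 hN'].
  have uM : units M.
    move=> i j; have := h1 1%N _ _ isT (incr_const i) (incr_const j).
    by move/inv1P; rewrite mxE.
  have [N hN] : mx_invertible M.
    have := h1 3%N id id isT (fun a b h => h) (fun a b h => h).
    by rewrite mxsub_id.
  exists N; split => //.
    move=> j i; apply/(L1 i j hN); exact: h1 2%N _ _ isT (incr_lift i) (incr_lift j).
  by move: hJ2; rewrite J2_some // => - [->].
case=> N [hN uM uN hG]; split; last by exists (Ht M) => //; rewrite J2_some.
case=> [|[|[|[|m]]]] f g //= _ hf hg.
- by apply/inv1P; rewrite mxE.
- have [i fi] := incr2 hf; have [j gj] := incr2 hg.
  have -> : mxsub f g M = mxsub (lift i) (lift j) M.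
    by apply/matrixP => a b; rewrite !mxE fi gj.
  by apply/(L1 i j hN).
- have -> : mxsub f g M = M by apply/matrixP => a b; rewrite !mxE !incr3.
  by exists N.
- by case: (incr4 hf).
Qed.

Lemma piter_mono T (f : pfun T) n x : pdom (piter n.+1 f) x -> pdom (piter n f) x.
Proof. by rewrite /pdom /= /Defs.pcomp; case: (piter n f x). Qed.

Lemma piter_le T (f : pfun T) n m x : (n <= m)%N -> pdom (piter m f) x -> pdom (piter n f) x.
Proof.
elim: m => [|m IH] hnm h.
  by move: hnm; rewrite leqn0 => /eqP ->.
move: hnm; rewrite leq_eqVlt => /orP [/eqP e | hlt]; first by rewrite e.
exact: IH (piter_mono h).
Qed.

Lemma piter_all T (P : T -> Prop) (f : pfun T) :
  (forall x, P x -> exists2 y, f x = Some y & P y) ->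
  forall n x, P x -> exists2 y, piter n f x = Some y & P y.
Proof.
move=> hf; elim=> [|n IH] x hx; first by exists x.
have [y e hy] := IH x hx; have [z e' hz] := hf y hy.
by exists z => //; rewrite /= /Defs.pcomp e.
Qed.

Lemma pdom2 T (f : pfun T) x : pdom (piter 2 f) x ->
  exists2 y, f x = Some y & pdom f y.
Proof.
rewrite /pdom /= /Defs.pcomp; case: (f x) => [y|] //= h; by exists y.
Qed.

Lemma domk_gen T (P : T -> Prop) (f : pfun T) k : (2 <= k)%N ->
  (forall x, P x -> exists2 y, f x = Some y & P y) ->
  (forall x, pdom (piter 2 f) x -> P x) ->
  forall x, P x <-> pdom (piter k f) x.
Proof.
move=> hk hf h2 x; split.
  by move=> hx; have [y e _] := piter_all hf k hx; rewrite /pdom e.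
by move=> h; apply: h2; apply: piter_le hk h.
Qed.

Lemma SS_dom (R : unitRingType) (M : 'M[R]_3) : SS M <-> pdom (@J R) M /\ pdom (@Jinv R) M.
Proof.
rewrite domJ domJinv; split.
  by case=> N [h uM uN hG]; split => //; exists N.
by case=> - [N [h uN]] [uM hG]; exists N.
Qed.

Lemma J_maps (R : unitRingType) (M : 'M[R]_3) : SS M -> exists2 y, J M = Some y & SS y.
Proof.
case=> N [h uM uN hG]; exists (Ht N); first exact: J_some.
exact: C1 h uM uN hG.
Qed.

Lemma domJ2 (R : unitRingType) (M : 'M[R]_3) : pdom (piter 2 (@J R)) M -> SS M.
Proof.
move=> hM; have [y e hy] := pdom2 hM.
have [N [h uN]] : exists N, mx_inv_of M N /\ units N by apply/domJ; rewrite /pdom e.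
move: e; rewrite (J_some h uN) => - [ey]; subst y.
have [Qi [hQ uQ]] := proj1 (domJ _) hy.
have [uM hG] := C2 h uN hQ uQ.
by exists N.
Qed.

Lemma J_bij (R : unitRingType) : pbij_on (@SS R) (@J R).
Proof.
split.
- exact: J_maps.
- move=> x y [Nx [hx ux uNx _]] [Ny [hy uy uNy _]].
  rewrite (J_some hx uNx) (J_some hy uNy) => - [e].
  have eN : Nx = Ny by rewrite -(HtK uNx) e HtK.
  subst Ny; case: hx => _ a; case: hy => b _.
  exact: inv_uniq a b.
- move=> y [N [h uy uN [K hK]]].
  exists K; first exact: C3 h uy uN hK.
  by rewrite (J_some (inv_of_sym hK) (Ht_units uy)) HtK.
Qed.

Definition scl (R : unitRingType) (d e : 'I_3 -> R) (X : 'M[R]_3) : 'M[R]_3 :=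
  \matrix_(i, j) (d i * X i j * e j).

Definition uf (R : unitRingType) (d : 'I_3 -> R) := forall i, d i \is a GRing.unit.

Definition finv (R : unitRingType) (d : 'I_3 -> R) := fun i => (d i)^-1.

Lemma uf_inv (R : unitRingType) (d : 'I_3 -> R) : uf d -> uf (finv d).
Proof. by move=> h i; rewrite /finv unitrV. Qed.

Lemma scl_mul (R : unitRingType) (d e : 'I_3 -> R) X :
  scl d e X = diag_mx (\row_i d i) *m X *m diag_mx (\row_j e j).
Proof. by apply/matrixP => i j; rewrite mul_mx_diag mul_diag_mx !mxE. Qed.

Lemma diag_inv' (R : unitRingType) (d : 'I_3 -> R) : uf d ->
  mx_inv_of (diag_mx (\row_i d i)) (diag_mx (\row_i finv d i)).
Proof.
move=> hu; split; rewrite mulmx_diag; apply/matrixP => a b;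
  rewrite !mxE /finv ?mulrV ?mulVr //.
Qed.

Lemma scl_inv (R : unitRingType) (d e : 'I_3 -> R) X Y : uf d -> uf e ->
  mx_inv_of X Y -> mx_inv_of (scl d e X) (scl (finv e) (finv d) Y).
Proof.
move=> hd he h; rewrite !scl_mul.
have [d1 d2] := diag_inv' hd; have [e1 e2] := diag_inv' he; case: h => h1 h2.
set D := diag_mx (\row_i d i) in d1 d2 *; set Di := diag_mx (\row_i finv d i) in d1 d2 *.
set E := diag_mx (\row_i e i) in e1 e2 *; set Ei := diag_mx (\row_i finv e i) in e1 e2 *.
split.
  by rewrite !mulmxA -(mulmxA _ E Ei) e1 mulmx1 -(mulmxA D X Y) h1 mulmx1 d1.
by rewrite !mulmxA -(mulmxA _ Di D) d2 mulmx1 -(mulmxA Ei Y X) h2 mulmx1 e2.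
Qed.

Lemma scl_units (R : unitRingType) (d e : 'I_3 -> R) X : uf d -> uf e ->
  units X -> units (scl d e X).
Proof. by move=> hd he hX i j; rewrite mxE unitrMl // unitrMr. Qed.

Lemma scl_Ht (R : unitRingType) (d e : 'I_3 -> R) X : uf d -> uf e -> units X ->
  Ht (scl d e X) = scl (finv e) (finv d) (Ht X).
Proof.
move=> hd he hX; apply/matrixP => i j; rewrite !mxE /finv.
by rewrite invrM ?unitrMr // invrM // mulrA.
Qed.

Lemma scl_SS (R : unitRingType) (d e : 'I_3 -> R) X : uf d -> uf e -> SS X -> SS (scl d e X).
Proof.
move=> hd he [N [h uX uN [G hG]]].
exists (scl (finv e) (finv d) N); split.
- exact: scl_inv.
- exact: scl_units.
- exact: scl_units (uf_inv he) (uf_inv hd) uN.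
- rewrite scl_Ht //; eexists; exact: scl_inv (uf_inv he) (uf_inv hd) hG.
Qed.

Lemma scl_domJ (R : unitRingType) (d e : 'I_3 -> R) X : uf d -> uf e ->
  pdom (@J R) X -> pdom (@J R) (scl d e X).
Proof.
move=> hd he /domJ [N [h uN]]; apply/domJ.
exists (scl (finv e) (finv d) N); split; first exact: scl_inv.
exact: scl_units (uf_inv he) (uf_inv hd) uN.
Qed.

Lemma scl_back (R : unitRingType) (d e : 'I_3 -> R) X : uf d -> uf e ->
  scl (finv d) (finv e) (scl d e X) = X.
Proof.
move=> hd he; apply/matrixP => i j; rewrite !mxE /finv.
by rewrite !mulrA mulVr // mul1r -mulrA mulrV // mulr1.
Qed.

Lemma Phi_some (R : unitRingType) (A N : 'M[R]_3) : is_hat A -> units A ->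
  mx_inv_of A N -> units N -> Phi A = Some (Ht (LamL N)).
Proof.
move=> hh uA hN uN; rewrite /Phi; case: excluded_middle_informative => [_|[]].
  by rewrite (proj2 (J1_some _ _) hN); move/all_unitsP: uN => ->.
by split => //; apply/all_unitsP.
Qed.

Lemma domPhi (R : unitRingType) (A : 'M[R]_3) :
  pdom (@Phi R) A <-> [/\ is_hat A, units A & exists N, mx_inv_of A N /\ units N].
Proof.
split; last first.
  by case=> hh uA [N [hN uN]]; rewrite /pdom (Phi_some hh uA hN uN).
rewrite /pdom /Phi; case: excluded_middle_informative => // - [hh /all_unitsP uA].
case: (J1_cases A) => [[N -> hN] | [-> _]] //.
by case: ifP => // /all_unitsP uN _; split => //; exists N.
Qed.

Lemma domPhiinv (R : unitRingType) (A : 'M[R]_3) :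
  pdom (@Phiinv R) A <-> [/\ is_hat A, units A & exists K, mx_inv_of (Ht A) K /\ units K].
Proof.
rewrite /pdom /Phiinv /Jinv /Defs.pcomp; case: excluded_middle_informative => hh; last first.
  by split => // - [].
rewrite /J2; case: ifP => [/all_unitsP uA | nu]; last first.
  by split => // - [_ /all_unitsP]; rewrite nu.
case: (J1_cases (J2tot A)) => [[K -> hK] | [-> hK]].
  split; first by case: ifP => // /all_unitsP uK _; split => //; exists K.
  case=> _ _ [K' [hK' uK']].
  have -> : K = K' by case: hK => a _; case: hK' => _ b; exact: inv_uniq a b.
  by move/all_unitsP: uK' => ->.
by split => // - [_ _ [K' [hK' _]]]; case: hK; exists K'.
Qed.

Lemma LamL_scl (R : unitRingType) (N : 'M[R]_3) :
  LamL N = scl (fun j => N ord0 ord0 * (N j ord0)^-1) (fun k => (N ord0 k)^-1) N.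
Proof. by apply/matrixP => i j; rewrite !mxE ?mulrA. Qed.

Lemma LamR_scl (R : unitRingType) (K : 'M[R]_3) :
  LamR K = scl (fun j => (K j ord0)^-1) (fun k => (K ord0 k)^-1 * K ord0 ord0) K.
Proof. by apply/matrixP => i j; rewrite !mxE ?mulrA. Qed.

Lemma HtLamL (R : unitRingType) (N : 'M[R]_3) : units N ->
  Ht (LamL N) = scl (fun j => N ord0 j) (fun k => N k ord0 * (N ord0 ord0)^-1) (Ht N).
Proof.
move=> uN; rewrite LamL_scl scl_Ht //; last by move=> i; rewrite unitrV.
  apply/matrixP => i j; rewrite !mxE /finv invrK invrM ?unitrV // invrK //.
by move=> i; rewrite unitrMl ?unitrV.
Qed.

Lemma hat_HtLamL (R : unitRingType) (N : 'M[R]_3) : units N -> is_hat (Ht (LamL N)).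
Proof.
move=> uN i; rewrite !mxE; split.
  by rewrite -(mulrA (N ord0 ord0)) mulVr // mulr1 mulrV // invr1.
by rewrite mulrV // mul1r mulrV // invr1.
Qed.

Lemma hat_scale (R : unitRingType) (A A' : 'M[R]_3) (u w : 'I_3 -> R) :
  is_hat A -> is_hat A' -> (forall i j, A' i j = u i * A i j * w j) -> w ord0 = 1 -> A' = A.
Proof.
move=> hA hA' e w0.
have uu : forall i, u i = 1.
  by move=> i; have := e i ord0; rewrite (proj2 (hA' i)) (proj2 (hA i)) w0 !mulr1.
have ww : forall j, w j = 1.
  by move=> j; have := e ord0 j; rewrite (proj1 (hA' j)) (proj1 (hA j)) uu !mul1r.
by apply/matrixP => i j; rewrite e uu ww mul1r mulr1.
Qed.

Definition SSh (R : unitRingType) (A : 'M[R]_3) := SS A /\ is_hat A.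

Lemma SSh_dom (R : unitRingType) (A : 'M[R]_3) :
  SSh A <-> pdom (@Phi R) A /\ pdom (@Phiinv R) A.
Proof.
rewrite domPhi domPhiinv; split.
  case=> - [N [h uA uN [K hK]]] hh; split; first by split => //; exists N.
  split => //; exists K; split => //.
  by have [? [_ ? _ _]] := C3 h uA uN hK.
case=> - [hh uA [N [h uN]]] [_ _ [K [hK _]]]; split => //.
by exists N; split => //; exists K.
Qed.

Lemma uf_d1 (R : unitRingType) (N : 'M[R]_3) : units N -> uf (fun j => N ord0 j).
Proof. by move=> u i. Qed.

Lemma uf_e1 (R : unitRingType) (N : 'M[R]_3) : units N ->
  uf (fun k => N k ord0 * (N ord0 ord0)^-1).
Proof. by move=> u i; rewrite unitrMl ?unitrV. Qed.

Lemma Phi_maps (R : unitRingType) (A : 'M[R]_3) : SSh A -> exists2 Y, Phi A = Some Y & SSh Y.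
Proof.
case=> - [N [h uA uN hG]] hh; exists (Ht (LamL N)); first exact: Phi_some.
split; last exact: hat_HtLamL.
rewrite HtLamL //; apply: scl_SS (uf_d1 uN) (uf_e1 uN) _.
exact: C1 h uA uN hG.
Qed.

Lemma domPhi2 (R : unitRingType) (A : 'M[R]_3) : pdom (piter 2 (@Phi R)) A -> SSh A.
Proof.
move=> hA; have [Y e hY] := pdom2 hA.
have [hh uA [N [h uN]]] : [/\ is_hat A, units A & exists N, mx_inv_of A N /\ units N].
  by apply/domPhi; rewrite /pdom e.
move: e; rewrite (Phi_some hh uA h uN) => - [eY]; subst Y.
have [_ _ [NY [hNY uNY]]] := proj1 (domPhi _) hY.
have hJ : pdom (@J R) (Ht N).
  rewrite -(scl_back (Ht N) (uf_d1 uN) (uf_e1 uN)) -HtLamL //.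
  apply: scl_domJ; [exact: uf_inv (uf_d1 uN) | exact: uf_inv (uf_e1 uN) |].
  by apply/domJ; exists NY.
split => //; apply: domJ2.
by rewrite /pdom /= /Defs.pcomp /= (J_some h uN).
Qed.

Lemma LamL_units (R : unitRingType) (N : 'M[R]_3) : units N -> units (LamL N).
Proof.
move=> u; rewrite LamL_scl; apply: scl_units => //.
  by move=> i; rewrite unitrMl ?unitrV.
by move=> i; rewrite unitrV.
Qed.

Lemma cancel_sand (R : unitRingType) (x y z : R) : x \is a GRing.unit -> y \is a GRing.unit ->
  x^-1 * (x * z * y) * y^-1 = z.
Proof. by move=> hx hy; rewrite !mulrA mulVr // mul1r -mulrA mulrV // mulr1. Qed.

Lemma Phi_inj (R : unitRingType) (A A' : 'M[R]_3) : SSh A -> SSh A' -> Phi A = Phi A' -> A = A'.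
Proof.
case=> - [N [h uA uN _]] hh [[N' [h' uA' uN' _]] hh'].
rewrite (Phi_some hh uA h uN) (Phi_some hh' uA' h' uN') => - [e].
have eL : LamL N = LamL N'.
  by rewrite -(HtK (LamL_units uN)) e HtK //; exact: LamL_units.
pose d := fun j => N ord0 ord0 * (N j ord0)^-1; pose e1 := fun k => (N ord0 k)^-1.
pose d' := fun j => N' ord0 ord0 * (N' j ord0)^-1; pose e1' := fun k => (N' ord0 k)^-1.
have ud : uf d by move=> i; rewrite unitrMl ?unitrV.
have ud' : uf d' by move=> i; rewrite unitrMl ?unitrV.
have ue : uf e1 by move=> i; rewrite unitrV.
have ue' : uf e1' by move=> i; rewrite unitrV.
pose dd := fun i => (d' i)^-1 * d i; pose ee := fun j => e1 j * (e1' j)^-1.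
have udd : uf dd by move=> i; rewrite unitrMl // unitrV.
have uee : uf ee by move=> i; rewrite unitrMl ?unitrV.
have eN : N' = scl dd ee N.
  apply/matrixP => i j; move/matrixP: eL => /(_ i j).
  rewrite !LamL_scl !mxE => eij.
  have eij' : d i * N i j * e1 j = d' i * N' i j * e1' j by exact: eij.
  rewrite /dd /ee.
  have -> : (d' i)^-1 * d i * N i j * (e1 j / e1' j) = (d' i)^-1 * (d i * N i j * e1 j) * (e1' j)^-1.
    by rewrite !mulrA.
  by rewrite eij' cancel_sand.
have hA' : mx_inv_of N' (scl (finv ee) (finv dd) A) by rewrite eN; exact: scl_inv (inv_of_sym h).
have eA : A' = scl (finv ee) (finv dd) A.
  by case: h' => a _; case: hA' => b _; symmetry; exact: inv_uniq b a.
symmetry; apply: (hat_scale (u := finv ee) (w := finv dd) hh hh').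
  by move=> i j; rewrite eA mxE.
by rewrite /finv /dd /d /d' (mulrV (uN _ _)) (mulrV (uN' _ _)) invr1 mul1r invr1.
Qed.

Lemma Phi_surj (R : unitRingType) (Y : 'M[R]_3) : SSh Y -> exists2 A, SSh A & Phi A = Some Y.
Proof.
case=> - [NY [hY uY uNY [K hK]]] hhY.
have [NK [hKK uK uNK hGK]] := C3 hY uY uNY hK.
have eNK : NK = Ht Y by case: hKK => a _; case: hK => b _; exact: inv_uniq a b.
subst NK.
pose dR := fun j => (K j ord0)^-1; pose eR := fun k => (K ord0 k)^-1 * K ord0 ord0.
have udR : uf dR by move=> i; rewrite unitrV.
have ueR : uf eR by move=> i; rewrite unitrMl ?unitrV.
have SSA : SS (scl dR eR K) by apply: scl_SS => //; exists (Ht Y).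
have hatA : is_hat (scl dR eR K).
  move=> i; rewrite !mxE /dR /eR; split.
    by rewrite -mulrA (mulrA (K ord0 i)) mulrV // mul1r mulVr.
  by rewrite mulVr // mul1r mulVr.
have hNA := scl_inv udR ueR hKK.
have uNA : units (scl (finv eR) (finv dR) (Ht Y)).
  by apply: scl_units; [exact: uf_inv | exact: uf_inv | exact: Ht_units].
have uA : units (scl dR eR K) by exact: scl_units.
exists (scl dR eR K); first by split.
rewrite (Phi_some hatA uA hNA uNA); congr Some.
set NA := scl (finv eR) (finv dR) (Ht Y).
apply: (hat_scale (u := fun i => NA ord0 i * finv (finv dR) i)
                  (w := fun j => finv (finv eR) j * (NA j ord0 * (NA ord0 ord0)^-1)) hhY).
- exact: hat_HtLamL.
- move=> i j; have uHY := Ht_units uY; rewrite HtLamL // /NA (scl_Ht (uf_inv ueR) (uf_inv udR) uHY) !mxE invrK.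
  by rewrite !mulrA.
- by rewrite (mulrV (uNA _ _)) mulr1 /finv invrK /eR mulVr //; apply: uK.
Qed.

Lemma Phi_bij (R : unitRingType) : pbij_on (@SSh R) (@Phi R).
Proof.
split; [exact: Phi_maps | move=> x y hx hy; exact: Phi_inj | exact: Phi_surj].
Qed.

Lemma pbij_ext T (P Q : T -> Prop) (f : pfun T) :
  (forall x, P x <-> Q x) -> pbij_on P f -> pbij_on Q f.
Proof.
move=> e [h1 h2 h3]; split.
- move=> x /e /h1 [y fy py]; exists y => //; exact/e.
- move=> x y /e hx /e hy; exact: h2.
- move=> y /e /h3 [x px fx]; exists x => //; exact/e.
Qed.

Local Close Scope ring_scope.

Theorem theorem2 (R : unitRingType) (k : nat) (hk : (2 <= k)%N) :
  ((forall M : 'M[R]_3, inS M <-> pdom (@J R) M /\ pdom (@Jinv R) M) /\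
   (forall M : 'M[R]_3, pdom (@J R) M /\ pdom (@Jinv R) M <-> pdom (piter k (@J R)) M)) /\
  ((forall M : 'M[R]_3, inShat M <-> pdom (@Phi R) M /\ pdom (@Phiinv R) M) /\
   (forall M : 'M[R]_3, pdom (@Phi R) M /\ pdom (@Phiinv R) M <-> pdom (piter k (@Phi R)) M)) /\
  (pbij_on (@inS R) (@J R) /\ pbij_on (@inShat R) (@Phi R)).
Proof.
have eS : forall M : 'M[R]_3, inS M <-> SS M by move=> M; exact: inS_SS.
have eSh : forall M : 'M[R]_3, inShat M <-> SSh M.
  by move=> M; rewrite /inShat /SSh eS.
split; [split|split; [split|split]].
- by move=> M; rewrite eS SS_dom.
- move=> M; rewrite -SS_dom.
  exact: (domk_gen hk (@J_maps R) (@domJ2 R)).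
- by move=> M; rewrite eSh SSh_dom.
- move=> M; rewrite -SSh_dom.
  exact: (domk_gen hk (@Phi_maps R) (@domPhi2 R)).
- apply: (@pbij_ext _ (@SS R)); last exact: J_bij.
  by move=> x; rewrite eS.
- apply: (@pbij_ext _ (@SSh R)); last exact: Phi_bij.
  by move=> x; rewrite eSh.
Qed.
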